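(* Let $T_0,T_1\subseteq\mathbb{Z}_2^\omega$ be thin sets such that $T_0\cup T_1=\mathbb{Z}_2^\omega$. Then $T_0$ and $T_1$ are disjoint and both are xor-sets.
   Context: $\mathbb{Z}_2^\omega$ is the set of infinite binary sequences indexed by $\omega=\{0,1,2,\dots\}$. A set $T\subseteq\mathbb{Z}_2^\omega$ is thin if for every $n\in\omega$ the map $x\mapsto x|_{\omega\setminus\{n\}}$ is injective on $T$. For $x\in\mathbb{Z}_2^\omega$ and $n\in\omega$, $x^{\#n}$ is the sequence obtained from $x$ by flipping the $n$-th coordinate ($x^{\#n}(k)=x(k)$ for $k\ne n$, $x^{\#n}(n)=1-x(n)$). A set $\mathcal{X}\subseteq\mathbb{Z}_2^\omega$ is a xor-set if for every $n\in\omega$ and $x\in\mathbb{Z}_2^\omega$: $x\in\mathcal{X}\iff x^{\#n}\notin\mathcal{X}$. *)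

(* Defs.v *)
From Stdlib Require Import Arith.

Definition seq2 := nat -> bool.

Definition thin (T : seq2 -> Prop) : Prop :=
  forall (n : nat) (x y : seq2), T x -> T y ->
    (forall k, k <> n -> x k = y k) -> x = y.

Definition flip (x : seq2) (n : nat) : seq2 :=
  fun k => if Nat.eqb k n then negb (x k) else x k.

Definition xor_set (X : seq2 -> Prop) : Prop :=
  forall (n : nat) (x : seq2), X x <-> ~ X (flip x n).

(* Main.v *)
Require Import Defs.
From Stdlib Require Import Arith Bool.

Lemma thin_flip (T : seq2 -> Prop) n x : thin T -> T x -> ~ T (flip x n).
Proof.
  intros Ht Hx Hf.
  assert (E : x = flip x n).
  { apply (Ht n); auto. intros k Hk. unfold flip.
    destruct (Nat.eqb_spec k n); [contradiction|reflexivity]. }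
  assert (E2 := f_equal (fun f => f n) E). simpl in E2. unfold flip in E2.
  rewrite Nat.eqb_refl in E2. destruct (x n); discriminate.
Qed.


Theorem proposition15 (T0 T1 : seq2 -> Prop) :
  thin T0 -> thin T1 -> (forall x : seq2, T0 x \/ T1 x) ->
  (forall x : seq2, ~ (T0 x /\ T1 x)) /\ xor_set T0 /\ xor_set T1.
Proof.
  intros H0 H1 Hu.
  split; [|split].
  - intros x [A B]. destruct (Hu (flip x 0)) as [C|C].
    + exact (thin_flip _ 0 x H0 A C).
    + exact (thin_flip _ 0 x H1 B C).
  - intros n x. split.
    + apply thin_flip; auto.
    + intros Hn. destruct (Hu x) as [C|C]; auto.
      destruct (Hu (flip x n)) as [D|D]; [contradiction|].
      exfalso. exact (thin_flip _ n x H1 C D).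
  - intros n x. split.
    + apply thin_flip; auto.
    + intros Hn. destruct (Hu x) as [C|C]; auto.
      destruct (Hu (flip x n)) as [D|D]; [|contradiction].
      exfalso. exact (thin_flip _ n x H0 C D).
Qed.
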